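(* Let $k \geq 2$ be an integer. If $c$ is a rational number such that $\mathcal{G}[\{K_{1,k}\}, c]$ is finite and $\mathcal{G}(\{K_{1,k}\}, c)^*$ is infinite (that is, $c = c(K_{1,k})$ exists), then \[c \geq \frac{2}{2k+3}.\]
   Context: Graphs are finite and simple. For $D \subseteq V(G)$, $N[D]$ is the union of closed neighbourhoods of vertices of $D$. For a set $\mathcal{F}$ of graphs, $D$ is $\mathcal{F}$-isolating if $G - N[D]$ contains no subgraph isomorphic to a member of $\mathcal{F}$, and $\iota(G,\mathcal{F})$ is the minimum size of such a set. Let $\mathcal{G}$ be the set of connected graphs $G$ with $V(G) = [n]$ for some $n \geq 1$. For real $\alpha > 0$, $\mathcal{G}(\mathcal{F},\alpha) = \{G \in \mathcal{G} : \iota(G,\mathcal{F}) \le \lfloor \alpha|V(G)| \rfloor\}$, $\mathcal{G}(\mathcal{F},\alpha)^* = \{G \in \mathcal{G}(\mathcal{F},\alpha) : \iota(G,\mathcal{F}) = \lfloor \alpha |V(G)|\rfloor\}$, and $\mathcal{G}[\mathcal{F},\alpha] = \mathcal{G} \setminus \mathcal{G}(\mathcal{F},\alpha)$. The number $c(\mathcal{F})$, when it exists, is a rational number such that $\mathcal{G}[\mathcal{F},c(\mathcal{F})]$ is finite and $\mathcal{G}(\mathcal{F},c(\mathcal{F}))^*$ is infinite. $K_{1,k}$ is the star with $k$ leaves. *)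

(* Defs.v *)
From Stdlib Require List.
From mathcomp Require Import all_boot all_order all_algebra.
Unset Printing Implicit Defensive.
Import Order.TTheory GRing.Theory Num.Theory.

(* A (labelled) graph with vertex set 'I_n (standing for [n] = {1..n}),
   given by its adjacency matrix. *)
Definition graph := {n : nat & {ffun 'I_n * 'I_n -> bool}}.
Definition order (G : graph) : nat := projT1 G.
Definition adj (G : graph) (x y : 'I_(order G)) : bool := projT2 G (x, y).

Definition simple_graph (G : graph) : Prop :=
  forall x y : 'I_(order G), adj G x y = adj G y x /\ ~~ adj G x x.

Definition connected_graph (G : graph) : Prop :=
  forall x y : 'I_(order G), connect (fun u v => adj G u v) x y.

Definition calG (G : graph) : Prop :=
  (1 <= order G)%N /\ simple_graph G /\ connected_graph G.

Definition closed_nbhd (G : graph) (D : {set 'I_(order G)}) : {set 'I_(order G)} :=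
  [set y | [exists x in D, (x == y) || adj G x y]].

Definition contains_copy_in (G : graph) (S : {set 'I_(order G)}) (H : graph) : bool :=
  [exists f : {ffun 'I_(order H) -> 'I_(order G)},
     [&& injectiveb f, [forall i, f i \in S] &
         [forall i, forall j, adj H i j ==> adj G (f i) (f j)]]].

Definition isolating (G : graph) (F : seq graph) (D : {set 'I_(order G)}) : bool :=
  all (fun H => ~~ contains_copy_in G (~: closed_nbhd G D) H) F.

Definition iota (G : graph) (F : seq graph) : nat :=
  \big[minn/order G]_(D : {set 'I_(order G)} | isolating G F D) #|D|.

Definition floorQ (a : rat) (G : graph) : int := Num.floor (a * (order G)%:R).

(* \mathcal{G}(F,a), \mathcal{G}(F,a)^*, \mathcal{G}[F,a] *)
Definition calG_le (F : seq graph) (a : rat) (G : graph) : Prop :=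
  calG G /\ (Posz (iota G F) <= floorQ a G)%R.
Definition calG_star (F : seq graph) (a : rat) (G : graph) : Prop :=
  calG G /\ Posz (iota G F) = floorQ a G.
Definition calG_gt (F : seq graph) (a : rat) (G : graph) : Prop :=
  calG G /\ ~ calG_le F a G.

Definition finite_family (P : graph -> Prop) : Prop :=
  exists s : seq graph, forall G, P G -> List.In G s.

(* the star K_{1,k}: vertex 0 is the centre, vertices 1..k the leaves *)
Definition star (k : nat) : graph :=
  existT (fun n => {ffun 'I_n * 'I_n -> bool}) k.+1
    [ffun p : 'I_k.+1 * 'I_k.+1 =>
       (nat_of_ord p.1 == 0%N) != (nat_of_ord p.2 == 0%N)].

(* Main.v *)
Require Import Defs.
From mathcomp Require Import all_boot all_order all_algebra zify.
Import Order.TTheory GRing.Theory Num.Theory.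

Definition LL (k : nat) := (2 * k + 3)%N.

Definition adjqr (k q r q' r' : nat) : bool :=
 ((r == 0) && (r' == 0) && (q != q')) ||
 ((q == q') && (((r == 0) && (r' == 1)) || ((r == 1) && (r' == 0)) ||
   [&& 1 <= r, r <= k.+1, k+2 <= r' & r' - (k+1) != r] ||
   [&& 1 <= r', r' <= k.+1, k+2 <= r & r - (k+1) != r'])).

Definition adjn (k v w : nat) : bool :=
  adjqr k (v %/ LL k) (v %% LL k) (w %/ LL k) (w %% LL k).

Definition Gm (k m : nat) : graph :=
  existT (fun n => {ffun 'I_n * 'I_n -> bool}) (m * LL k)
    [ffun p : 'I_(m * LL k) * 'I_(m * LL k) => adjn k p.1 p.2].

Lemma adjGm k m (x y : 'I_(m * LL k)) : adj (Gm k m) x y = adjn k x y.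
Proof. by rewrite /adj /= ffunE. Qed.

Lemma LL_gt0 k : 0 < LL k. Proof. rewrite /LL; lia. Qed.

Lemma qrE k q r : r < LL k -> (q * LL k + r) %/ LL k = q /\ (q * LL k + r) %% LL k = r.
Proof.
move=> Hr; split.
  by rewrite divnMDl ?LL_gt0 // divn_small // addn0.
by rewrite modnMDl modn_small.
Qed.

Lemma mk_lt k m q r : q < m -> r < LL k -> q * LL k + r < m * LL k.
Proof.
move=> Hq Hr; have : q.+1 * LL k <= m * LL k by rewrite leq_mul2r; apply/orP; right.
rewrite mulSn; lia.
Qed.

Definition mk k m q r (Hq : q < m) (Hr : r < LL k) : 'I_(m * LL k) :=
  Ordinal (@mk_lt k m q r Hq Hr).

Lemma adjn_mk k q r q' r' : r < LL k -> r' < LL k ->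
  adjn k (q * LL k + r) (q' * LL k + r') = adjqr k q r q' r'.
Proof.
move=> Hr Hr'; rewrite /adjn.
by case: (@qrE k q r Hr) => -> ->; case: (@qrE k q' r' Hr') => -> ->.
Qed.

Lemma adjn_sym k v w : adjn k v w = adjn k w v.
Proof.
rewrite /adjn /adjqr.
move: (v %/ LL k) (v %% LL k) (w %/ LL k) (w %% LL k) => a b c d.
apply/idP/idP; lia.
Qed.

Lemma adjn_irr k v : adjn k v v = false.
Proof.
rewrite /adjn /adjqr.
move: (v %/ LL k) (v %% LL k) => a b.
apply/negbTE; lia.
Qed.
Arguments mk {k m q r}.
Section Conn.
Variables (k m : nat) (Hk : 1 < k) (Hm : 0 < m).
Let e := fun u v : 'I_(m * LL k) => adj (Gm k m) u v.
Let z := mk Hm (LL_gt0 k).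

Lemma edge q r q' r' (Hq : q < m) (Hr : r < LL k) (Hq' : q' < m) (Hr' : r' < LL k) :
  adjqr k q r q' r' -> connect e (mk Hq' Hr') z -> connect e (mk Hq Hr) z.
Proof.
move=> Ha; apply: connect_trans; apply: connect1.
by rewrite /e adjGm /= adjn_mk.
Qed.

Lemma conn_mk q r (Hq : q < m) (Hr : r < LL k) : connect e (mk Hq Hr) z.
Proof.
have C1 : forall q (Hq : q < m) (H0 : 0 < LL k), connect e (mk Hq H0) z.
  move=> q0 Hq0 H0; case: (eqVneq q0 0) => [E|NE].
    subst q0; have -> : mk Hq0 H0 = z by apply: val_inj.
    exact: connect0.
  apply: (@edge _ _ 0 0 _ _ Hm (LL_gt0 k)); last exact: connect0.
  rewrite /adjqr; lia.
have H1 : 1 < LL k by rewrite /LL; lia.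
have C2 : forall q (Hq : q < m) (H : 1 < LL k), connect e (mk Hq H) z.
  move=> q0 Hq0 H; apply: (@edge _ _ q0 0 _ _ Hq0 (LL_gt0 k)); last exact: C1.
  rewrite /adjqr; lia.
have C3 : forall q r (Hq : q < m) (H : r < LL k), k + 3 <= r -> connect e (mk Hq H) z.
  move=> q0 r0 Hq0 H Hr0; apply: (@edge _ _ q0 1 _ _ Hq0 H1); last exact: C2.
  rewrite /adjqr; move: H; rewrite /LL; lia.
have H4 : k + 4 < LL k by rewrite /LL; lia.
case: (ltnP r 2) => Hr2.
  case: (eqVneq r 0) => [E|NE].
    subst r; exact: C1.
  have E : r = 1 by lia.
  subst r; exact: C2.
case: (leqP r k.+1) => Hrk.
  have Hs : (if r == 2 then k + 4 else k + 3) < LL k by case: ifP; rewrite /LL; lia.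
  apply: (@edge _ _ q (if r == 2 then k + 4 else k + 3) _ _ Hq Hs); last first.
    by apply: C3; case: ifP; lia.
  rewrite /adjqr; case: ifP; lia.
case: (eqVneq r (k + 2)) => [E|NE].
  have H2 : 2 < LL k by rewrite /LL; lia.
  apply: (@edge _ _ q 2 _ _ Hq H2); first by rewrite /adjqr; lia.
  apply: (@edge _ _ q (k + 4) _ _ Hq H4); first by rewrite /adjqr; lia.
  by apply: C3; lia.
by apply: C3; lia.
Qed.

Lemma Gm_connected : connected_graph (Gm k m).
Proof.
have Hs : connect_sym e.
  apply: sym_connect_sym => x y; rewrite /e !adjGm; exact: adjn_sym.
have Hz : forall v : 'I_(m * LL k), connect e v z.
  move=> v.
  have Hq : v %/ LL k < m by rewrite ltn_divLR ?LL_gt0.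
  have Hr : v %% LL k < LL k by rewrite ltn_mod LL_gt0.
  have -> : v = mk Hq Hr by apply: val_inj; rewrite /= -divn_eq.
  exact: conn_mk.
move=> x y; apply: (connect_trans (Hz x)); rewrite Hs; exact: Hz.
Qed.
End Conn.
Definition jj (i t : nat) := if t <= i then t.-1 else t.
Definition roff k (cw : bool) i t :=
  if t == 0 then (if cw then k + 2 + i else 1 + i)
  else (if cw then 1 + jj i t else k + 2 + jj i t).

Lemma roff_lt k cw i t : i <= k -> t <= k -> roff k cw i t < LL k.
Proof. rewrite /roff /jj /LL => Hi Ht; repeat case: ifP => ?; lia. Qed.

Lemma roff_inj k cw i t t' : i <= k -> t <= k -> t' <= k ->
  roff k cw i t = roff k cw i t' -> t = t'.
Proof. rewrite /roff /jj => Hi Ht Ht'; repeat case: ifP => ?; lia. Qed.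

Lemma roff_adj k cw i t t' : i <= k -> t <= k -> t' <= k ->
  (t == 0) != (t' == 0) -> forall q, adjqr k q (roff k cw i t) q (roff k cw i t').
Proof.
rewrite /roff /jj /adjqr => Hi Ht Ht' H q; move: H; repeat case: ifP => ?; lia.
Qed.

Definition cwof k ra := ~~ (k + 2 <= ra).
Definition iof k ra := if (1 <= ra) && (ra <= k.+1) then ra - 1
  else if k + 2 <= ra then ra - (k + 2) else 0.

Lemma iof_le k ra : ra < LL k -> iof k ra <= k.
Proof. rewrite /iof /LL => H; repeat case: ifP => ?; lia. Qed.

Lemma roff_avoid' (k q ra t qd rd : nat) (cw : bool) (i : nat) : ra < LL k -> t <= k -> rd < LL k ->
  (cw = true /\ ((ra = 0 /\ i = 0) \/ (1 <= ra <= k.+1 /\ i = ra - 1)) \/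
   (cw = false /\ k + 2 <= ra /\ i = ra - (k + 2))) ->
  (qd = q -> rd = ra) ->
  ~~ (((qd == q) && (rd == roff k cw i t)) || adjqr k qd rd q (roff k cw i t)).
Proof.
rewrite /roff /jj /adjqr /LL => Hra Ht Hrd Hs Hq.
case: (eqVneq qd q) => Eq.
  move: (Hq Eq) => ->; subst qd.
  case: cw Hs => Hs; repeat case: ifP => ?; lia.
case: cw Hs => Hs; repeat case: ifP => ?; lia.
Qed.

Lemma roff_avoid k q ra t qd rd : ra < LL k -> t <= k -> rd < LL k ->
  (qd = q -> rd = ra) ->
  ~~ (((qd == q) && (rd == roff k (cwof k ra) (iof k ra) t)) ||
      adjqr k qd rd q (roff k (cwof k ra) (iof k ra) t)).
Proof.
move=> Hra Ht Hrd; apply: roff_avoid' => //.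
rewrite /cwof /iof; case: (leqP (k + 2) ra) => H1 /=.
  right; split => //; split => //; case: ifP => //; lia.
left; split => //; case: (eqVneq ra 0) => H0.
  by left; rewrite H0.
right; rewrite ifT; lia.
Qed.
Lemma eq_qr k q r q' r' : r < LL k -> r' < LL k ->
  (q * LL k + r == q' * LL k + r') = (q == q') && (r == r').
Proof.
move=> Hr Hr'; apply/eqP/andP => [E|[/eqP -> /eqP ->] //].
case: (@qrE k q r Hr) => E1 E2; case: (@qrE k q' r' Hr') => E3 E4.
by split; apply/eqP; [rewrite -E1 -E3 E | rewrite -E2 -E4 E].
Qed.

Section Iso.
Variables (k m : nat).

Lemma not_iso (D : {set 'I_(m * LL k)}) q (Hq : q < m) ra :
  ra < LL k ->
  (forall d : 'I_(m * LL k), d \in D -> d %/ LL k = q -> d %% LL k = ra) ->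
  ~~ isolating (Gm k m) [:: star k] D.
Proof.
move=> Hra HD.
have Hi : iof k ra <= k by apply: iof_le.
rewrite /isolating /= andbT negbK.
apply/existsP.
exists [ffun t : 'I_k.+1 => (mk Hq (@roff_lt k (cwof k ra) (iof k ra) t Hi (ltn_ord t)) : 'I_(m * LL k))].
apply/and3P; split.
- apply/injectiveP => t t'; rewrite !ffunE => /(congr1 val) /= /addnI E.
  apply: val_inj; exact: (roff_inj _ _ _ _ _ Hi (ltn_ord t) (ltn_ord t') E).
- apply/forallP => t; rewrite ffunE in_setC /closed_nbhd inE negb_exists.
  apply/forallP => d; apply/negP => /andP [Hd H]; move: H; apply/negP.
  have Hrd : d %% LL k < LL k by rewrite ltn_mod LL_gt0.
  rewrite -val_eqE adjGm /=.
  move: (HD d Hd) Hrd (divn_eq d (LL k)).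
  move: (d %/ LL k) (d %% LL k) => qd rd Hq' Hrd ->.
  have Hro := roff_lt k (cwof k ra) (iof k ra) t Hi (ltn_ord t).
  rewrite adjn_mk // eq_qr //.
  by apply: roff_avoid => //; exact: ltn_ord t.
- apply/forallP => t; apply/forallP => t'; apply/implyP.
  rewrite /adj /= !ffunE /= => H.
  rewrite adjn_mk; [ | exact: (roff_lt k _ _ t Hi (ltn_ord t)) | exact: (roff_lt k _ _ t' Hi (ltn_ord t'))].
  apply: roff_adj => //; [exact: ltn_ord t | exact: ltn_ord t'].
Qed.

Lemma block2 (D : {set 'I_(m * LL k)}) q (Hq : q < m) :
  isolating (Gm k m) [:: star k] D ->
  2 <= #|[set d in D | d %/ LL k == q]|.
Proof.
move=> Hiso; rewrite leqNgt; apply/negP => H.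
have H1 : #|[set d in D | d %/ LL k == q]| <= 1 by lia.
case: (pickP (mem [set d in D | d %/ LL k == q])) => [d0 Hd0 | Hn].
  suff : ~~ isolating (Gm k m) [:: star k] D by rewrite Hiso.
  apply: (@not_iso D q Hq (d0 %% LL k)).
    by rewrite ltn_mod LL_gt0.
  move=> d Hd Eq.
  have Hd' : d \in [set d in D | d %/ LL k == q] by rewrite inE Hd Eq eqxx.
  by move/card_le1_eqP: H1 => /(_ d d0 Hd' Hd0) ->.
suff : ~~ isolating (Gm k m) [:: star k] D by rewrite Hiso.
apply: (@not_iso D q Hq 0); first exact: LL_gt0.
move=> d Hd Eq; move: (Hn d); rewrite /= inE Hd Eq eqxx //.
Qed.

Lemma sum_eq1 x : x < m -> \sum_(q < m) (x == q : nat) = 1.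
Proof.
move=> Hx; rewrite (bigD1 (Ordinal Hx)) //= eqxx big1 // => q Hq.
case: (eqVneq x q) => // E; move: Hq; case/negP; apply/eqP/val_inj => /=; by rewrite E.
Qed.

Lemma card_ge (D : {set 'I_(m * LL k)}) :
  isolating (Gm k m) [:: star k] D -> 2 * m <= #|D|.
Proof.
move=> Hiso.
have E : \sum_(q < m) #|[set d in D | d %/ LL k == q]| = #|D|.
  transitivity (\sum_(q < m) \sum_(d in D) (d %/ LL k == q : nat)).
    apply: eq_bigr => q _; rewrite -sum1_card big_mkcond /= [RHS]big_mkcond /=.
    apply: eq_bigr => d _; rewrite inE; by case: (d \in D); case: (d %/ LL k == q).
  rewrite exchange_big /= -sum1_card; apply: eq_bigr => d _.
  apply: sum_eq1; by rewrite ltn_divLR ?LL_gt0.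
rewrite -E; apply: (@leq_trans (\sum_(q < m) 2)).
  by rewrite sum_nat_const card_ord mulnC.
apply: leq_sum => q _; exact: block2 D q (ltn_ord q) Hiso.
Qed.
End Iso.
Lemma iota_ge k m : 0 < m -> 2 * m <= Defs.iota (Gm k m) [:: star k].
Proof.
move=> Hm; rewrite /Defs.iota; apply: (big_ind (fun x => 2 * m <= x)).
- rewrite /= mulnC leq_mul2l /LL; apply/orP; right; lia.
- by move=> x y Hx Hy; rewrite leq_min Hx Hy.
- by move=> D HD; apply: card_ge.
Qed.

Lemma calG_Gm k m : 1 < k -> 0 < m -> calG (Gm k m).
Proof.
move=> Hk Hm; split; first by rewrite /= muln_gt0 Hm LL_gt0.
split; last exact: Gm_connected.
by move=> x y; rewrite !adjGm adjn_sym adjn_irr.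
Qed.

Lemma In_order s G : List.In G s -> Defs.order G <= sumn (map Defs.order s).
Proof.
elim: s => //= H s IH [-> | HI]; first exact: leq_addr.
apply: leq_trans (IH HI) _; exact: leq_addl.
Qed.

Theorem proposition1 (k : nat) (c : rat) :
  (2 <= k)%N -> (0 < c)%R ->
  finite_family (calG_gt [:: star k] c) ->
  ~ finite_family (calG_star [:: star k] c) ->
  (2%:R / (2 * k + 3)%:R <= c)%R.
Proof.
move=> Hk Hc [s Hs] _.
rewrite leNgt; apply/negP => Hlt.
pose m := (sumn (map Defs.order s)).+1.
have Hm : 0 < m by [].
have HG : calG_gt [:: star k] c (Gm k m).
  split; first exact: calG_Gm.
  move=> [_ Hle].
  have Hi := iota_ge k m Hm.
  move: Hle; rewrite /floorQ => Hle.
  have H1 : ((Defs.iota (Gm k m) [:: star k])%:R <= c * (Defs.order (Gm k m))%:R :> rat)%R.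
    have H0 : (((Defs.iota (Gm k m) [:: star k])%:Z)%:~R <= (Num.floor (c * (Defs.order (Gm k m))%:R))%:~R :> rat)%R by rewrite ler_int.
    exact: le_trans H0 (floor_le _).
  have HL : (0 < (2 * k + 3)%:R :> rat)%R by rewrite ltr0n; lia.
  have H2 : (c * (2 * k + 3)%:R < 2)%R by rewrite -ltr_pdivlMr.
  have H3 : (c * (Defs.order (Gm k m))%:R < (2 * m)%:R :> rat)%R.
    rewrite /= /LL natrM mulrCA [X in (_ < X)%R]natrM [X in (_ < X)%R]mulrC ltr_pM2l ?ltr0n //.
  have H4 : ((2 * m)%:R <= (Defs.iota (Gm k m) [:: star k])%:R :> rat)%R by rewrite ler_nat.
  have := le_lt_trans (le_trans H4 H1) H3; by rewrite ltxx.
have := In_order _ _ (Hs _ HG); rewrite /= -/m.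
rewrite /LL mulnDr; lia.
Qed.
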